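(* $\mathcal{L}_{\mathsf{DSAFA}}\subsetneq\mathcal{L}_{\mathsf{SAFA}}$, where $\mathcal{L}_{\mathsf{DSAFA}}$ and $\mathcal{L}_{\mathsf{SAFA}}$ are the classes of data languages accepted by deterministic SAFA and by (nondeterministic) SAFA respectively.
   Context: $D$ is a fixed countably infinite set of data values; for a finite alphabet $\Sigma$, data languages are subsets of $(\Sigma\times D)^*$. A set augmented finite automaton (SAFA) is a tuple $M=(Q,\Sigma\times D,q_0,F,H,\delta)$: $Q$ finite set of states, $q_0\in Q$ initial, $F\subseteq Q$ final, $H=\{h_1,\dots,h_m\}$ a finite collection of (names of) sets of data values, $\delta\subseteq Q\times\Sigma\times C\times OP\times Q$ with $C=\{p(h_i),\,!p(h_i): h_i\in H\}$, $OP=\{-\}\cup\{\mathsf{ins}(h_i):h_i\in H\}$. Configurations are $(q,\langle S_1,\dots,S_m\rangle)$ with $S_i\subseteq D$ finite; initially state $q_0$ and all sets empty. On reading $(a,d)$, a transition $(q,a,\alpha,op,q')$ from the current state may be taken if $\alpha=p(h_i)$ and $d\in S_i$, or $\alpha=\,!p(h_i)$ and $d\notin S_i$; then the state becomes $q'$ and if $op=\mathsf{ins}(h_j)$ the value $d$ is added to $S_j$ ($op=-$ changes nothing). A word is accepted if some run reads it entirely and ends in $F$. A SAFA is deterministic (DSAFA) if for every $q\in Q$ and $a\in\Sigma$, all transitions from $q$ on $a$ test the same set $h_i$, with at most one transition having condition $p(h_i)$ and at most one having condition $!p(h_i)$. *)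

(* Defs.v *)
From mathcomp Require Import all_boot.
Set Implicit Arguments. Unset Strict Implicit. Unset Printing Implicit Defensive.

(* The fixed countably infinite set of data values D is taken to be nat. *)
Definition data := nat.

Inductive cond (m : nat) : Type :=
| Pin  of 'I_m    (* p(h_i)  : d \in S_i    *)
| Pout of 'I_m.   (* !p(h_i) : d \notin S_i *)

Definition cond_set m (c : cond m) : 'I_m :=
  match c with Pin i => i | Pout i => i end.

(* Operations: None = "-", Some j = ins(h_j). *)
Definition op (m : nat) := option 'I_m.

Record safa (Sigma : finType) := Safa {
  st : finType;
  nsets : nat;
  q0 : st;
  final : pred st;
  delta : st -> Sigma -> cond nsets -> op nsets -> st -> bool
}.
Arguments st {Sigma} s.
Arguments nsets {Sigma} s.
Arguments q0 {Sigma} s.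
Arguments final {Sigma} s _.
Arguments delta {Sigma} s _ _ _ _ _.

(* Contents of the sets: S_i is represented by its membership predicate
   (finite, since built from the empty set by finitely many insertions). *)
Definition sets (m : nat) := 'I_m -> data -> bool.

Definition empty_sets m : sets m := fun _ _ => false.

Definition test m (c : cond m) (S : sets m) (d : data) : bool :=
  match c with Pin i => S i d | Pout i => ~~ S i d end.

Definition apply_op m (o : op m) (d : data) (S : sets m) : sets m :=
  match o with
  | None => S
  | Some j => fun i x => if i == j then (x == d) || S i x else S i x
  end.

Fixpoint runs Sigma (M : safa Sigma) (q : st M) (S : sets (nsets M))
    (w : seq (Sigma * data)) : Prop :=
  match w with
  | [::] => final M q
  | (a, d) :: w' =>
      exists (c : cond (nsets M)) (o : op (nsets M)) (q' : st M),
        delta M q a c o q' /\ test c S d /\ @runs Sigma M q' (apply_op o d S) w'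
  end.

Definition accepts Sigma (M : safa Sigma) (w : seq (Sigma * data)) : Prop :=
  @runs Sigma M (q0 M) (@empty_sets (nsets M)) w.

Definition deterministic Sigma (M : safa Sigma) : Prop :=
  forall (q : st M) (a : Sigma) c1 o1 q1 c2 o2 q2,
    delta M q a c1 o1 q1 -> delta M q a c2 o2 q2 ->
    cond_set c1 = cond_set c2 /\ (c1 = c2 -> o1 = o2 /\ q1 = q2).

Definition data_language (Sigma : finType) := seq (Sigma * data) -> Prop.

Definition SAFA_language Sigma (L : data_language Sigma) : Prop :=
  exists M : safa Sigma, forall w, L w <-> accepts M w.

Definition DSAFA_language Sigma (L : data_language Sigma) : Prop :=
  exists M : safa Sigma, deterministic M /\ forall w, L w <-> accepts M w.

(* Main.v *)
Require Import Defs.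
From mathcomp Require Import all_boot.
From Stdlib Require Import Setoid.

Lemma cond_eq m (c1 c2 : cond m) S d : cond_set c1 = cond_set c2 ->
  test c1 S d -> test c2 S d -> c1 = c2.
Proof.
case: c1 => i; case: c2 => j /= E; subst => //= H1 H2.
- by rewrite H1 in H2.
- by rewrite H2 in H1.
Qed.

Section Gen.
Variable Sigma : finType.
Variable M : safa Sigma.

Inductive reach : st M -> sets (nsets M) -> seq (Sigma * data) -> st M -> sets (nsets M) -> Prop :=
| R0 q S : reach q S [::] q S
| RS q S a d w c o q1 q' S' : delta M q a c o q1 -> test c S d ->
    reach q1 (apply_op o d S) w q' S' -> reach q S ((a,d)::w) q' S'.

Lemma reach_nil q S q' S' : reach q S [::] q' S' -> q' = q /\ S' = S.
Proof. by move=> H; inversion H. Qed.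

Lemma reach_cons q S a d w q' S' : reach q S ((a,d)::w) q' S' ->
  exists c o q1, [/\ delta M q a c o q1, test c S d & reach q1 (apply_op o d S) w q' S'].
Proof. move=> H; inversion H; subst; eexists _, _, _; split; eassumption. Qed.

Lemma runs_cat q S u v : runs q S (u ++ v) <-> exists q' S', reach q S u q' S' /\ runs q' S' v.
Proof.
elim: u q S => [|[a d] u IH] q S /=.
  split; first by move=> H; exists q, S; split => //; constructor.
  by move=> [q' [S' [/reach_nil [-> ->] H2]]].
split.
  move=> [c [o [q1 [H1 [H2 H3]]]]].
  have [q' [S' [H4 H5]]] := (proj1 (IH _ _)) H3.
  exists q', S'; split => //; exact: RS H1 H2 H4.
move=> [q' [S' [/reach_cons [c [o [q1 [Hdl Ht Hr]]]] H2]]].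
exists c, o, q1; split => //; split => //.
by apply/IH; exists q', S'.
Qed.

Lemma reach_cat q S u v q2 S2 : reach q S (u ++ v) q2 S2 ->
  exists q1 S1, reach q S u q1 S1 /\ reach q1 S1 v q2 S2.
Proof.
elim: u q S => [|[a d] u IH] q S /=.
  by move=> H; exists q, S; split => //; constructor.
move=> /reach_cons [c [o [q1 [Hdl Ht Hr]]]].
have [q3 [S3 [H4 H5]]] := IH _ _ Hr.
exists q3, S3; split => //; exact: RS Hdl Ht H4.
Qed.

Lemma reach_det q S u q1 S1 q2 S2 : deterministic M ->
  reach q S u q1 S1 -> reach q S u q2 S2 -> q1 = q2 /\ S1 = S2.
Proof.
move=> Hd H; elim: H q2 S2 => [q0' S0|qa S0 a d w c o q3 q' S' Hdl Ht Hr IH] q2 S2 H2.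
  by move: H2 => /reach_nil [-> ->].
move: H2 => /reach_cons [c0 [o0 [q4 [Hdl2 Ht2 Hr2]]]].
have [Hcs Heq] := Hd _ _ _ _ _ _ _ _ Hdl Hdl2.
have Ec : c = c0 by exact: cond_eq Hcs Ht Ht2.
have [Eo Eq] := Heq Ec; subst.
exact: IH.
Qed.

Lemma reach_notin q S u q' S' i x : reach q S u q' S' -> x \notin map snd u -> S' i x = S i x.
Proof.
move=> H; elim: H => [//|q0' S0 a d w c o q1 q'' S'' _ _ _ IH] /=.
rewrite in_cons negb_or => /andP [Hxd Hx].
rewrite IH //; clear IH; case: o => [j|] //=.
by case: (i == j) => //=; rewrite (negbTE Hxd).
Qed.

End Gen.

Definition P (n : nat) : seq (unit * data) := [seq (tt, k) | k <- iota 1 n].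

Lemma P_S n : P n.+1 = rcons (P n) (tt, n.+1).
Proof. have E : n.+1 = n + 1 by rewrite addn1. by rewrite /P [in LHS]E iotaD map_cat cats1 add1n. Qed.

Definition L : data_language unit :=
  fun w => exists u d, w = u ++ [:: (tt, d); (tt, d)].

Lemma L_good n : L (P n.+1 ++ [:: (tt, n.+1)]).
Proof. by exists (P n), n.+1; rewrite P_S cat_rcons. Qed.

Lemma L_bad n k : k != n.+1 -> ~ L (P n.+1 ++ [:: (tt, k)]).
Proof.
move=> Hk [u [d E]].
move: E; rewrite cats1 -cat_rcons cats1 P_S => /rcons_inj [/rcons_inj [_ E1] E2].
by move: Hk; rewrite E1 E2 eqxx.
Qed.

Definition ndelta (q : 'I_3) (a : unit) (c : cond 1) (o : op 1) (q' : 'I_3) : bool :=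
  match c, o with
  | Pout _, None => ((q : nat) == 0) && ((q' : nat) == 0)
  | Pout _, Some _ => ((q : nat) == 0) && ((q' : nat) == 1)
  | Pin _, None => ((q : nat) == 1) && ((q' : nat) == 2)
  | Pin _, Some _ => false
  end.

Definition NM : safa unit := @Safa unit 'I_3 1 ord0 (fun q => (q : nat) == 2) ndelta.

Definition s1 : 'I_3 := @Ordinal 3 1 isT.
Definition s2 : 'I_3 := @Ordinal 3 2 isT.

Lemma runs2 S w : @runs _ NM s2 S w -> w = [::].
Proof.
case: w => [//|[a d] w] /= [c [o [q' [Hd _]]]].
by move: Hd; case: c => i; case: o.
Qed.

Lemma runs1 S w : @runs _ NM s1 S w -> exists d, w = [:: (tt, d)] /\ S ord0 d.
Proof.
case: w => [//|[a d] w] /= [c [o [q' [Hd [Ht Hr]]]]].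
move: Hd Ht Hr; case: c => i; case: o => [j|] //= /eqP Hq.
have -> : q' = s2 by apply/val_inj.
move=> Ht /runs2 ->; exists d; case: a; split => //.
by rewrite (ord1 i) in Ht.
Qed.

Lemma L_cons x w : L (x :: w) <-> L w \/ w = [:: x].
Proof.
split.
  move=> [[|y u] [d /= E]].
    by case: E => -> ->; right.
  by case: E => _ ->; left; exists u, d.
case=> [[u [d ->]]|->].
  by exists (x :: u), d.
by case: x => [[] d]; exists [::], d.
Qed.

Lemma runs0 w : @runs _ NM ord0 (@empty_sets 1) w <-> L w.
Proof.
elim: w => [|[a d] w IH].
  by split => //= [[[|y u] [d]]].
rewrite L_cons -IH; split.
  move=> [c [o [q' [Hd [Ht Hr]]]]].
  move: Hd Ht Hr; case: c => i; case: o => [j|] //= /eqP Hq.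
    have -> : q' = s1 by apply/val_inj.
    move=> _ /runs1 [d' [-> /=]]; rewrite (ord1 j) eqxx /empty_sets orbF => /eqP ->.
    by case: a; right.
  have -> : q' = ord0 by apply/val_inj.
  by move=> _ Hr; left.
case=> [H | ->].
  by exists (Pout ord0), None, ord0.
exists (Pout ord0), (Some ord0), s1; split => //; split => //=.
exists (Pin ord0), None, s2; split => //; split => //=. by rewrite eqxx.
Qed.

Lemma notin_P n x : x \notin map snd (P n) -> True.
Proof. by []. Qed.

Lemma mem_snd_map (s : seq nat) x : (x \in map snd [seq (tt, k) | k <- s]) = (x \in s).
Proof. by elim: s => [|y s IH] //=; rewrite !in_cons IH. Qed.


Theorem theorem13 :
  (forall (Sigma : finType) (L : data_language Sigma),
      DSAFA_language L -> SAFA_language L) /\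
  (exists (Sigma : finType) (L : data_language Sigma),
      SAFA_language L /\ ~ DSAFA_language L).
Proof.
split.
  by move=> Sigma L0 [M [_ H]]; exists M.
exists unit, L; split.
  by exists NM => w; rewrite /accepts; symmetry; exact: runs0.
move=> [M [Hd HL]].
set m := nsets M.
have acc n : accepts M (P n.+1 ++ [:: (tt, n.+1)]) by apply/HL; exact: L_good.
have rej n k : k != n.+1 -> ~ accepts M (P n.+1 ++ [:: (tt, k)]).
  by move=> Hk /HL; exact: L_bad.
move: (acc m); rewrite /accepts => /runs_cat [qN [SN [HrN _]]].
pose Qb n (i : 'I_m) := SN i n && [forall k : 'I_n, (0 < k) ==> ~~ SN i k].
have claim n : n < m.+1 -> exists i, Qb n.+1 i.
  move=> Hn.
  have EP : P m.+1 = P n.+1 ++ [seq (tt, k) | k <- iota (1 + n.+1) (m - n)].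
    by rewrite /P -map_cat -iotaD addSn subnKC.
  move: HrN; rewrite EP => /reach_cat [q' [S' [Hr1 Hr2]]].
  have Hnot i x : x <= n.+1 -> SN i x = S' i x.
    move=> Hx; apply: (@reach_notin _ _ _ _ _ _ _ i x Hr2).
    by rewrite mem_snd_map mem_iota add1n ltnNge Hx.
  have H0 i : S' i 0 = false.
    by rewrite (@reach_notin _ _ _ _ _ _ _ i 0 Hr1) // mem_snd_map mem_iota.
  move: (acc n); rewrite /accepts => /runs_cat [q'' [S'' [Hr1' Hrun]]].
  have [Eq ES] := reach_det _ _ _ _ _ _ _ _ _ Hd Hr1' Hr1; subst q'' S''.
  have rej' k : k != n.+1 -> ~ runs q' S' [:: (tt, k)].
    move=> Hk Hr; apply: (rej n k Hk); rewrite /accepts; apply/runs_cat.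
    by exists q', S'.
  move: Hrun => [c [o [q1 [Hdl [Ht Hf]]]]].
  case: c Hdl Ht => i Hdl Ht.
    exists i; rewrite /Qb Hnot //; apply/andP; split => //.
    apply/forallP => k; apply/implyP => Hk0.
    rewrite Hnot; last exact: ltnW (ltn_ord k).
    apply/negP => Hin; apply: (rej' k).
      by rewrite neq_ltn ltn_ord.
    by exists (Pin i), o, q1.
  exfalso; apply: (rej' 0) => //.
  by exists (Pout i), o, q1; rewrite /= H0.
have [i0 _] := claim 0 isT.
pose f (k : 'I_m.+1) : 'I_m := odflt i0 [pick i | Qb k.+1 i].
have fP (k : 'I_m.+1) : Qb k.+1 (f k).
  rewrite /f; case: pickP => [i Hi|H] //=.
  by have [i Hi] := claim k (ltn_ord k); move: (H i); rewrite Hi.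
have finj : injective f.
  move=> k1 k2 E; apply/val_inj.
  have H1 := fP k1; have H2 := fP k2; rewrite E in H1.
  have aux a b i : a < b -> Qb a.+1 i -> Qb b.+1 i -> False.
    move=> Hab /andP [Ha _] /andP [_ /forallP Hb].
    have := Hb (@Ordinal b.+1 a.+1 Hab); rewrite /= Ha; by [].
  case: (ltngtP k1 k2) => // Hlt; exfalso.
    exact: aux Hlt H1 H2.
  exact: aux Hlt H2 H1.
by have := leq_card f finj; rewrite !card_ord ltnn.
Qed.
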